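(* Let $X$ be a real normed linear space with zero $\theta$, such that $\dim X>1$ and the norm is strictly convex. Let $m\in\mathbb{N}$ with $\dim X\geqslant m$ (i.e. $X$ contains $m$ linearly independent elements). Let $E$ satisfy $B(\theta,1)\subseteq E\subseteq\overline{B}(\theta,1)$ and $E=\bigcup_{i=1}^m A_i$, where $A_i\cong A_j$ for all $i,j$. Then either $\theta\in\bigcap_{i=1}^m\mathrm{Int}\,A_i$, or $\theta\notin\bigcup_{i=1}^m\mathrm{Int}\,A_i$.
   Context: $B(\theta,1)=\{x:\|x\|<1\}$, $\overline{B}(\theta,1)=\{x:\|x\|\leqslant1\}$. The norm is strictly convex if for all $x\ne y$ with $\|x\|=\|y\|=1$ and $\lambda\in(0,1)$, $\|\lambda x+(1-\lambda)y\|<1$. Sets $A,B\subseteq X$ are congruent, $A\cong B$, if there is a surjective map $f\colon X\to X$ with $\|f(x)-f(y)\|=\|x-y\|$ for all $x,y$ and $f(A)=B$. $\mathrm{Int}\,A$ is the set of $x\in A$ such that some open ball $B(x,\varepsilon)\subseteq A$. Completeness of $X$ is not assumed. *)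

(* Defs.v *)
From HB Require Import structures.
From mathcomp Require Import all_boot all_order all_algebra.
From mathcomp Require Import all_classical all_reals all_analysis.
Set Implicit Arguments. Unset Strict Implicit. Unset Printing Implicit Defensive.
Import Order.TTheory GRing.Theory Num.Theory.
Import numFieldNormedType.Exports.
Local Open Scope classical_set_scope.
Local Open Scope ring_scope.

Section Defs.
Context {R : realType} {X : normedModType R}.

Definition oball (x : X) (r : R) : set X := [set y | `|y - x| < r].
Definition cball (x : X) (r : R) : set X := [set y | `|y - x| <= r].

Definition strictly_convex : Prop :=
  forall x y : X, x != y -> `|x| = 1 -> `|y| = 1 ->
  forall l : R, 0 < l < 1 -> `|l *: x + (1 - l) *: y| < 1.

Definition lin_indep (m : nat) (v : 'I_m -> X) : Prop :=
  forall c : 'I_m -> R, \sum_(i < m) c i *: v i = 0 -> forall i, c i = 0.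

Definition dim_ge (m : nat) : Prop := exists v : 'I_m -> X, lin_indep v.

Definition isometry_onto (f : X -> X) : Prop :=
  (forall y, exists x, f x = y) /\ (forall x y, `|f x - f y| = `|x - y|).

Definition congruent (A B : set X) : Prop :=
  exists f : X -> X, isometry_onto f /\ f @` A = B.

Definition Int (A : set X) : set X :=
  [set x | A x /\ exists e : R, 0 < e /\ oball x e `<=` A].
End Defs.

(* Main.v *)
Require Import Defs.
From HB Require Import structures.
From mathcomp Require Import all_boot all_order all_algebra.
From mathcomp Require Import all_classical all_reals all_analysis.
From mathcomp Require Import ring lra.
Import Order.TTheory GRing.Theory Num.Theory.
Import numFieldNormedType.Exports.
Local Open Scope classical_set_scope.
Local Open Scope ring_scope.

Lemma LA (F : fieldType) n m (D : 'M[F]_n) (B : 'M[F]_(m, n)) :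
  (0 < m)%N -> (m <= \rank D)%N ->
  exists z : 'rV[F]_n, (z <= D)%MS /\ z != 0 /\
    forall k, (z *m B^T) 0 k = 0 \/ (z *m B^T) 0 k = -1.
Proof.
move=> m0 mD.
have H := mxrank_mul_ker D B^T.
case: (eqVneq (D :&: kermx B^T)%MS 0) => [K0|Kn0].
- rewrite K0 mxrank0 addn0 in H.
  have rf : row_full (D *m B^T).
    rewrite /row_full eqn_leq rank_leq_col /= H //.
  have /submxP [w Hw] := submx_full (const_mx (-1) : 'rV[F]_m) rf.
  exists (w *m D); split; first exact: submxMl.
  have E : (w *m D) *m B^T = const_mx (-1) by rewrite -mulmxA -Hw.
  split; last by move=> k; right; rewrite E mxE.
  apply/eqP => z0; move: E; rewrite z0 mul0mx => /matrixP /(_ 0 (Ordinal m0)).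
  rewrite !mxE => /eqP; rewrite eq_sym oppr_eq0 oner_eq0 //.
- have /rowV0Pn [v] := Kn0.
  rewrite sub_capmx => /andP [vD /sub_kermxP vK] vn0.
  exists v; split => //; split => // k; left; by rewrite vK mxE.
Qed.

Section S.
Context {R : realType} {X : normedModType R}.

Lemma Lc_cont (V : normedModType R) n (u : 'I_n -> V) :
  continuous (fun c : 'rV[R]_n => \sum_(j < n) c 0 j *: u j).
Proof.
move=> c.
suff H : forall r : seq 'I_n,
  {for c, continuous (fun c : 'rV[R]_n => \sum_(j <- r) c 0 j *: u j)}.
  exact: H.
elim=> [|j r IH].
  rewrite (_ : (fun c : 'rV[R]_n => _) = fun=> 0); first exact: cst_continuous.
  by apply/funext => x; rewrite big_nil.
rewrite (_ : (fun c : 'rV[R]_n => _) = (fun c : 'rV[R]_n => c 0 j *: u j) + (fun c => \sum_(j <- r) c 0 j *: u j)); last first.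
  by apply/funext => x; rewrite big_cons.
apply: continuousD => //.
apply: (@continuousZr_tmp _ _ _ (fun c : 'rV[R]_n => c 0 j)).
exact: coord_continuous.
Qed.

Definition Lc {n} (u : 'I_n -> X) (c : 'rV[R]_n) : X := \sum_(j < n) c 0 j *: u j.
Definition supp {n} (S : {set 'I_n}) (c : 'rV[R]_n) := forall j, j \notin S -> c 0 j = 0.
Definition indep {n} (u : 'I_n -> X) S := forall c, supp S c -> Lc u c = 0 -> c = 0.

Lemma LcB n (u : 'I_n -> X) c b s : Lc u (c - s *: b) = Lc u c - s *: Lc u b.
Proof.
rewrite /Lc scaler_sumr -sumrB; apply: eq_bigr => j _.
by rewrite !mxE scalerBl scalerA.
Qed.

Lemma LcZ n (u : 'I_n -> X) c a : Lc u (a *: c) = a *: Lc u c.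
Proof.
rewrite /Lc scaler_sumr; apply: eq_bigr => j _; by rewrite !mxE scalerA.
Qed.

Lemma suppB {n} {S : {set 'I_n}} {c b} s : supp S c -> supp S b -> supp S (c - s *: b).
Proof. by move=> hc hb j jS; rewrite !mxE hc // hb // mulr0 subr0. Qed.

Lemma suppZ {n} {S : {set 'I_n}} {c} a : supp S c -> supp S (a *: c).
Proof. by move=> hc j jS; rewrite !mxE hc // mulr0. Qed.

Lemma span_max n (u : 'I_n -> X) (S : {set 'I_n}) : indep u S ->
  (forall j, j \notin S -> ~ indep u (j |: S)) ->
  forall j, exists b, supp S b /\ Lc u b = u j.
Proof.
move=> iS mS j; case: (boolP (j \in S)) => jS.
  exists (\row_i (i == j)%:R); split.
    move=> i iS0; rewrite mxE; case: eqP => // ij; by move: iS0; rewrite ij jS.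
  rewrite /Lc (bigD1 j) //= mxE eqxx scale1r big1 ?addr0 // => i /negbTE ne.
  by rewrite mxE ne scale0r.
have := mS j jS; move/existsNP => [c]; move/not_implyP => [sc].
move/not_implyP => [L0 cn0].
have cj : c 0 j != 0.
  apply/eqP => cj0; apply: cn0; apply: iS => // i iS0.
  case: (eqVneq i j) => [->//|ij]; apply: sc; by rewrite in_setU1 negb_or ij.
exists (\row_i (if i == j then 0 else - c 0 i / c 0 j)); split.
  move=> i iS0; rewrite mxE; case: eqP => // /eqP ij.
  by rewrite sc ?oppr0 ?mul0r // in_setU1 negb_or ij.
move: L0; rewrite /Lc (bigD1 j) //= => /eqP; rewrite addrC addr_eq0 => /eqP E.
rewrite (bigD1 j) //= mxE eqxx scale0r add0r.
rewrite (eq_bigr (fun i => (- (c 0 j)^-1) *: (c 0 i *: u i))); last first.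
  move=> i /negbTE ne; rewrite mxE ne scalerA; congr (_ *: _).
  by rewrite mulNr mulNr mulrC.
by rewrite -scaler_sumr E scalerN scaleNr opprK scalerA mulVf // scale1r.
Qed.

Lemma CL m (v q : 'I_m -> X) : (0 < m)%N -> lin_indep v ->
  exists y : X, `|y| = 1 /\ forall k s, 0 <= s -> 1 <= `|y - s *: q k|.
Proof.
move=> m0 hv.
pose u (j : 'I_(m + m)) : X := match fintype.split j with inl i => v i | inr k => q k end.
have uL : forall i, u (lshift m i) = v i.
  by move=> i; rewrite /u (unsplitK (inl _ i)).
have uR : forall k, u (rshift m k) = q k.
  by move=> k; rewrite /u (unsplitK (inr _ k)).
pose S0 : {set 'I_(m + m)} := finset (fun j : 'I_(m + m) => (j < m)%N).
have iS0 : indep u S0.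
  move=> c sc L0.
  have cR : forall k, c 0 (rshift m k) = 0.
    by move=> k; apply: sc; rewrite inE /= -ltnNge leq_addr.
  move: L0; rewrite /Lc big_split_ord /=.
  rewrite [X in _ + X]big1 ?addr0; last by move=> k _; rewrite cR scale0r.
  under eq_bigr do rewrite uL.
  move/(hv (fun i => c 0 (lshift m i))) => cL.
  apply/rowP => j; rewrite mxE -(splitK j); case: (fintype.split j) => [i|k] /=.
    exact: cL.
  exact: cR.
pose P (T : {set 'I_(m + m)}) := (S0 \subset T) && `[< indep u T >].
have PS0 : P S0 by rewrite /P subxx /=; apply/asboolP.
case: (@arg_maxnP _ S0 P (fun T : {set 'I_(m + m)} => #|T|) PS0) => S /andP [S0S /asboolP iS] Smax.
have mS : forall j, j \notin S -> ~ indep u (j |: S).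
  move=> j jS ij.
  have : P (j |: S).
    rewrite /P; apply/andP; split; last by apply/asboolP.
    apply: (fintype.subset_trans S0S); by apply/fintype.subsetP => x xS; rewrite in_setU1 xS orbT.
  move/Smax; rewrite cardsU1 jS /=; by rewrite add1n ltnn.
have sp := @span_max _ u S iS mS.
have : forall k, exists b, supp S b /\ Lc u b = q k.
  by move=> k; rewrite -uR; exact: sp.
move/choice => [b Hb].
pose B := \matrix_(k < m, j < m + m) b k 0 j.
pose D : 'M[R]_(m + m) := diag_mx (\row_j (j \in S)%:R).
have rD : (m <= \rank D)%N.
  have E : \rank (pid_mx m : 'M[R]_(m, m + m)) = m.
    by rewrite rank_pid_mx // leq_addr.
  rewrite -[X in (X <= _)%N]E.
  apply: mxrankS; apply/submxP; exists (pid_mx m).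
  rewrite mul_mx_diag; apply/matrixP => i j; rewrite !mxE.
  case: (boolP (j \in S)) => jS; first by rewrite mulr1.
  rewrite mulr0; case: eqP => //= ij.
  have : j \in S0 by rewrite inE -ij ltn_ord.
  by move/(fintype.subsetP S0S); rewrite (negbTE jS).
have [z [zD [zn0 zB]]] := @LA _ _ _ D B m0 rD.
have sz : supp S z.
  case/submxP: zD => w -> j jS; rewrite mul_mx_diag !mxE (negbTE jS) mulr0 //.
pose psi (c : 'rV[R]_(m + m)) := \sum_j c 0 j * z 0 j.
have psiB : forall k, psi (b k) <= 0.
  move=> k; have : (z *m B^T) 0 k = psi (b k).
    rewrite !mxE /psi; apply: eq_bigr => j _; by rewrite !mxE mulrC.
  by move=> <-; case: (zB k) => ->; rewrite ?lexx ?lerN10.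
have psiB2 : forall c d s, psi (c - s *: d) = psi c - s * psi d.
  move=> c d s; rewrite /psi mulr_sumr -sumrB; apply: eq_bigr => j _.
  by rewrite !mxE mulrBl mulrA.
have psiZ : forall c a, psi (a *: c) = a * psi c.
  move=> c a; rewrite /psi mulr_sumr; apply: eq_bigr => j _.
  by rewrite !mxE mulrA.
have Lz : forall c, supp S c -> c != 0 -> Lc u c != 0.
  by move=> c sc /eqP cn0; apply/eqP => L0; exact: cn0 (iS c sc L0).
pose Sig : set 'rV[R]_(m + m) :=
  (\bigcap_(j in [set j | j \notin S]) ((fun c : 'rV[R]_(m + m) => c 0 j) @^-1` [set 0]))
  `&` ((fun c : 'rV[R]_(m + m) => `|c|) @^-1` [set 1]).
have SigE : forall c, Sig c <-> supp S c /\ `|c| = 1.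
  move=> c; split => [[H1 H2]|[H1 H2]]; split => //; try (move=> j jS; exact: H1 j jS).
have cSig : compact Sig.
  apply: bounded_closed_compact.
    rewrite /= /bounded_near; near=> M0 => c [_ /= H]; rewrite /= H; near: M0; apply: nbhs_pinfty_ge; exact: num_real.
  apply: closedI.
    apply: closed_bigI => j _; apply: preimage_closed; last exact: closed_eq.
    by move=> c _; exact: coord_continuous.
  apply: preimage_closed; last exact: closed_eq.
  by move=> c _; exact: norm_continuous.
have nz : forall c : 'rV[R]_(m + m), c != 0 -> `|(`|c|^-1 *: c)| = 1.
  by move=> c cn0; rewrite normrZ normfV normr_id mulVf // normr_eq0.
pose f c := psi c / `|Lc u c|.
have fhom : forall c a, 0 < a -> f (a *: c) = f c.
  move=> c a a0; rewrite /f psiZ LcZ normrZ gtr0_norm // invfM mulrACA.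
  by rewrite mulfV ?gt_eqF // mul1r.
have fcont : {within Sig, continuous f}.
  apply: continuous_in_subspaceT => c; rewrite inE => /SigE [sc nc].
  have cn0 : c != 0.
    by apply/eqP => c0; move: nc; rewrite c0 normr0 => /eqP; rewrite eq_sym oner_eq0.
  apply: continuousM.
    exact: (@Lc_cont R^o _ (fun j => z 0 j)).
  apply: continuousV; first by rewrite normr_eq0; exact: Lz.
  apply: (@continuous_comp _ _ _ (Lc u) Num.norm); last exact: norm_continuous.
  exact: Lc_cont.
have Sig0 : Sig !=set0.
  by exists (`|z|^-1 *: z); apply/SigE; split; [exact: suppZ | exact: nz].
have [c0 c0S c0max] := EVT_max_rV Sig0 cSig fcont.
move: c0S; rewrite inE => /SigE [sc0 nc0].
have c0n0 : c0 != 0.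
  by apply/eqP => c00; move: nc0; rewrite c00 normr0 => /eqP; rewrite eq_sym oner_eq0.
pose M := f c0.
have K : forall c, supp S c -> psi c <= M * `|Lc u c|.
  move=> c sc; case: (eqVneq c 0) => [->|cn0].
    have -> : Lc u 0 = 0 by rewrite /Lc big1 // => j _; rewrite mxE scale0r.
    rewrite normr0 mulr0 /psi big1 // => j _; by rewrite mxE mul0r.
  have Lpos : 0 < `|Lc u c| by rewrite normr_gt0 Lz.
  have := c0max (`|c|^-1 *: c).
  rewrite inE => H; have {H} := H (proj2 (SigE _) (conj (suppZ _ sc) (nz _ cn0))).
  by rewrite fhom ?invr_gt0 ?normr_gt0 // /f ler_pdivrMr.
have zpos : 0 < psi z.
  case: (pselect (exists j, z 0 j != 0)) => [[j zj]|H]; last first.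
    exfalso; move/eqP: zn0; apply; apply/rowP => j; rewrite mxE.
    by apply/eqP/negPn/negP => zj; apply: H; exists j.
  rewrite /psi (bigD1 j) //=.
  have h1 : 0 < z 0 j * z 0 j by rewrite lt_def mulf_neq0 //= -expr2 sqr_ge0.
  have h2 : 0 <= \sum_(i < m + m | i != j) z 0 i * z 0 i.
    by apply: sumr_ge0 => i _; rewrite -expr2 sqr_ge0.
  lra.
have Mpos : 0 < M.
  have := c0max (`|z|^-1 *: z).
  rewrite inE => H; have {H} := H (proj2 (SigE _) (conj (suppZ _ sz) (nz _ zn0))).
  rewrite fhom ?invr_gt0 ?normr_gt0 //; apply: lt_le_trans.
  by rewrite /f divr_gt0 // normr_gt0 Lz.
pose l := `|Lc u c0|.
have lpos : 0 < l by rewrite normr_gt0 Lz.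
exists (l^-1 *: Lc u c0); split.
  by rewrite normrZ normfV normr_id mulVf // gt_eqF.
move=> k s s0.
have := K (l^-1 *: c0 - s *: b k) (suppB s (suppZ _ sc0) (Hb k).1).
rewrite LcB LcZ (Hb k).2 psiB2 psiZ.
have -> : l^-1 * psi c0 = M by rewrite /M /f mulrC.
have h : s * psi (b k) <= 0 := mulr_ge0_le0 s0 (psiB k).
move=> H; rewrite -(ler_pMr _ Mpos).
lra.
Unshelve. all: by end_near.
Qed.

Lemma strictL (hsc : @strictly_convex R X) (y q : X) : q != 0 -> `|y| = 1 ->
  (forall s : R, 0 <= s -> 1 <= `|y - s *: q|) -> 1 < `|y - q|.
Proof.
move=> qn0 ny H.
rewrite ltNge; apply/negP => H1.
have e1 : `|y - q| = 1 by apply/le_anti; rewrite H1 /=; move: (H 1 ler01); rewrite scale1r.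
have yq : y != y - q.
  apply/eqP => E; move/eqP: qn0; apply.
  have := congr1 (fun w => y - w) E => /=.
  by rewrite subrr opprB addrC subrK => ->.
have hl : (2^-1 : R) + 2^-1 = 1 by lra.
have hl2 : (1 - 2^-1 : R) = 2^-1 by lra.
have l01 : ((0 : R) < 2^-1) && ((2^-1 : R) < 1).
  have a1 : (0 : R) < 2^-1 by lra.
  have a2 : (2^-1 : R) < 1 by lra.
  by rewrite a1 a2.
have := hsc y (y - q) yq ny e1 (2^-1) l01.
rewrite hl2 scalerBr addrA -scalerDl hl scale1r.
move: (H 2^-1); rewrite invr_ge0 ler0n => /(_ isT) H2 H3.
by move: (le_lt_trans H2 H3); rewrite ltxx.
Qed.

End S.

Theorem proposition1 (R : realType) (X : normedModType R)
  (hdim : @dim_ge R X 2) (hsc : @strictly_convex R X)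
  (m : nat) (hm : @dim_ge R X m)
  (E : set X) (A : 'I_m -> set X)
  (hBE : oball 0 1 `<=` E) (hEB : E `<=` cball 0 1)
  (hEA : E = \bigcup_(i in [set: 'I_m]) A i)
  (hcong : forall i j : 'I_m, congruent (A i) (A j)) :
  (forall i : 'I_m, Int (A i) 0) \/ (forall i : 'I_m, ~ Int (A i) 0).
Proof.
case: (pselect (exists i, Int (A i) 0)) => [[i Hi]|H]; last first.
  by right => i Hi; apply: H; exists i.
left => j; case: (pselect (Int (A j) 0)) => // Hj; exfalso.
have m0 : (0 < m)%N by case: i {Hi} => k /= km; apply: leq_ltn_trans km.
have inE' : forall k x, A k x -> `|x - 0| <= 1.
  move=> k x Ax; apply: hEB; rewrite hEA; by exists k.
case: Hi => Ai0 [e [e0 He]].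
case: (hcong i j) => h [[hs hi] himg].
have h0 : h 0 != 0.
  apply/eqP => h00; apply: Hj; split.
    by rewrite -himg; exists 0.
  exists e; split => // y Hy; rewrite -himg.
  have [x hx] := hs y; exists x => //; apply: He.
  by rewrite /oball /= -(hi x 0) hx h00.
have [p hp] := hs 0.
have pn0 : p != 0 by apply/eqP => p0; move/eqP: h0; apply; rewrite -p0 hp.
have Aic : forall x, A i x -> `|x - 0| <= 1 /\ `|x - p| <= 1.
  move=> x Ax; split; first exact: inE' Ax.
  rewrite -hi hp; apply: (inE' j); rewrite -himg; by exists x.
have : forall k, exists qk : X, qk != 0 /\ forall x, A k x -> `|x - qk| <= 1.
  move=> k; case: (hcong i k) => g [[gs gi] gimg].
  case: (eqVneq (g 0) 0) => g0.
    exists (g p); split.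
      apply/eqP => gp0; move/eqP: pn0; apply.
      have : `|p - 0| = 0 by rewrite -gi gp0 g0 subrr normr0.
      by rewrite subr0 => /normr0_eq0.
    by move=> y; rewrite -gimg => -[x Ax <-]; rewrite gi; case: (Aic x Ax).
  exists (g 0); split => //.
  by move=> y; rewrite -gimg => -[x Ax <-]; rewrite gi; case: (Aic x Ax).
move/choice => [q Hq].
case: hm => v hv.
have [y [ny Hy]] := CL m v q m0 hv.
have Hs : forall k, 1 < `|y - q k|.
  by move=> k; exact: (strictL hsc y (q k) (Hq k).1 ny (Hy k)).
have Hn : forall k, \forall t \near (1 : R), 1 < `|t *: y - q k|.
  move=> k.
  have cf : {for (1 : R), continuous (fun t : R => `|t *: y - q k|)}.
    apply: (@continuous_comp _ _ _ (fun t : R => t *: y - q k) Num.norm); last exact: norm_continuous.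
    apply: cvgB; [exact: scalel_continuous | exact: cvg_cst].
  apply: (cvgr_gt _ cf); by rewrite scale1r.
have Hn3 : \forall t \near (1:R), forall k, 1 < `|t *: y - q k|.
  exact: (@filter_forall _ _ (fun k (t : R) => 1 < `|t *: y - q k|) _ _ Hn).
move: Hn3.
move=> Hn2; have := iffLR (nbhs_ballP _ _) Hn2; case=> d d0 Hd.
pose d' := Order.min d 1 / 2.
have hd1 : Order.min d 1 <= d by rewrite ge_min lexx.
have hd2 : Order.min d 1 <= 1 by rewrite ge_min lexx orbT.
have hd3 : 0 < Order.min d 1 by rewrite lt_min d0 ltr01.
have : ball (1 : R) d (1 - d').
  rewrite /ball /= opprB addrC subrK gtr0_norm /d'; lra.
move/Hd => H1.
have : oball 0 1 ((1 - d') *: y).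
  rewrite /oball /= subr0 normrZ ny mulr1 gtr0_norm /d'; lra.
move/hBE; rewrite hEA => -[k _ Ak].
have := (Hq k).2 _ Ak.
by rewrite leNgt H1.
Qed.
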